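(* Let $G$ and $H$ be finite graphs such that $H$ fractionally edge-tiles $G$. Let $f(K)$ denote any one of the following for a graph $K$: (a) the number of acyclic orientations of $K$; (b) the number of forests in $K$ (spanning subgraphs without cycles, i.e. edge subsets containing no cycle); (c) the number of matchings in $K$. Then $$f(G)^{1/|E(G)|}\le f(H)^{1/|E(H)|}.$$
   Context: A copy of $H$ in $G$ is a subgraph isomorphic to $H$. $H$ fractionally edge-tiles $G$ means there is a finite list of copies of $H$ in $G$ such that every edge of $G$ belongs to the same number of copies in the list. A matching is a set of pairwise vertex-disjoint edges (the empty set counts). $E(K)$ is the edge set of $K$. *)

(* Defs.v *)
From mathcomp Require Import all_boot.
From mathcomp Require Import boolp.
From Stdlib Require Import Reals.

Set Implicit Arguments.
Unset Strict Implicit.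
Unset Printing Implicit Defensive.

Definition simple_graph (V : finType) (E : {set {set V}}) : Prop :=
  forall e, e \in E -> #|e| = 2.

(* The copy is the subgraph with vertex set
   phi @: VH and edge set copy_edges phi (it is isomorphic to H via phi). *)
Definition is_copy (VH VG : finType) (EH : {set {set VH}}) (EG : {set {set VG}})
  (phi : VH -> VG) : Prop :=
  injective phi /\ forall e, e \in EH -> phi @: e \in EG.

Definition copy_edges (VH VG : finType) (EH : {set {set VH}}) (phi : VH -> VG)
  : {set {set VG}} := [set (phi @: (e : {set VH})) | e in EH].

Definition frac_edge_tiles (VH VG : finType) (EH : {set {set VH}})
  (EG : {set {set VG}}) : Prop :=
  exists (l : seq (VH -> VG)) (k : nat),
    0 < k /\ (forall phi, List.In phi l -> is_copy EH EG phi) /\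
    forall e, e \in EG -> count (fun phi => e \in copy_edges EH phi) l = k.

Definition is_orientation (V : finType) (E : {set {set V}})
  (D : {ffun V * V -> bool}) : bool :=
  [forall x, forall y, D (x, y) ==> ([set x; y] \in E)] &&
  [forall x, forall y, ([set x; y] \in E) ==> (D (x, y) != D (y, x))].

Definition has_directed_cycle (V : finType) (D : {ffun V * V -> bool}) : Prop :=
  exists s : seq V, 0 < size s /\ uniq s /\ cycle (fun x y => D (x, y)) s.

Definition n_acyclic_orientations (V : finType) (E : {set {set V}}) : nat :=
  #|[set D : {ffun V * V -> bool} | is_orientation E D &&
                                   `[< ~ has_directed_cycle D >]]|.

Definition has_cycle (V : finType) (F : {set {set V}}) : Prop :=
  exists s : seq V, 3 <= size s /\ uniq s /\ cycle (fun x y => [set x; y] \in F) s.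

Definition n_forests (V : finType) (E : {set {set V}}) : nat :=
  #|[set F : {set {set V}} | (F \subset E) && `[< ~ has_cycle F >]]|.

Definition is_matching (V : finType) (E M : {set {set V}}) : bool :=
  (M \subset E) &&
  [forall e1 in M, forall e2 in M, (e1 != e2) ==> [disjoint e1 & e2]].

Definition n_matchings (V : finType) (E : {set {set V}}) : nat :=
  #|[set M : {set {set V}} | is_matching E M]|.

Definition root_ineq (f : forall V : finType, {set {set V}} -> nat)
  (VG VH : finType) (EG : {set {set VG}}) (EH : {set {set VH}}) : Prop :=
  (Rpower (INR (f VG EG)) (/ INR #|EG|) <= Rpower (INR (f VH EH)) (/ INR #|EH|))%R.

(* Main.v *)
Require Import Defs.
From mathcomp Require Import all_boot.
From Stdlib Require Import Reals.
From Stdlib Require Lra.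
From mathcomp Require all_order all_algebra ring lra.
From mathcomp Require Import boolp.

Module RpM.
Import Lra.
Import ssrnat.

Lemma INR_expn a k : INR (a ^ k) = (INR a ^ k)%R.
Proof. elim: k => [//|k IH]; rewrite expnS mulnE mult_INR IH /=; lra. Qed.

Lemma ln0 : ln 0 = 0%R.
Proof. rewrite /ln; case: (Rlt_dec 0%R 0%R) => h //; case: (Rlt_irrefl _ h). Qed.

Lemma exp_le x y : (x <= y)%R -> (exp x <= exp y)%R.
Proof.
move=> h; destruct (Rle_lt_or_eq_dec _ _ h) as [h'|h'].
  by apply: Rlt_le; apply: exp_increasing.
by rewrite h'; apply: Rle_refl.
Qed.

Lemma real_part (a b k L p q : nat) : 0 < k -> 0 < p -> 0 < q ->
  a ^ k <= b ^ L -> k * p = L * q ->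
  (Rpower (INR a) (/ INR p) <= Rpower (INR b) (/ INR q))%R.
Proof.
move=> k0 p0 q0 hab e.
have L0 : 0 < L.
  case: L e {hab} => [|L] // /eqP; rewrite mul0n muln_eq0 => /orP[] /eqP h.
    by move: k0; rewrite h.
  by move: p0; rewrite h.
have pR : (0 < INR p)%R by apply: lt_0_INR; apply/ltP.
have qR : (0 < INR q)%R by apply: lt_0_INR; apply/ltP.
have kR : (0 < INR k)%R by apply: lt_0_INR; apply/ltP.
case: (posnP b) => [b0 | bpos].
  have a0 : a = 0.
    by move: hab; rewrite b0 exp0n // leqn0 expn_eq0 => /andP[/eqP].
  rewrite a0 b0 /Rpower /= ln0 !Rmult_0_r; apply: Rle_refl.
have bR : (1 <= INR b)%R by apply: (le_INR 1); apply/leP.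
case: (posnP a) => [a0 | apos].
  rewrite a0 /Rpower /= ln0 Rmult_0_r exp_0.
  have : (0 <= ln (INR b))%R.
    destruct (Rle_lt_or_eq_dec _ _ bR) as [h|h]; last by rewrite -h ln_1; lra.
    by rewrite -ln_1; apply: Rlt_le; apply: ln_increasing; lra.
  move=> h; rewrite -exp_0; apply: exp_le.
  apply: Rmult_le_pos => //; apply: Rlt_le; apply: Rinv_0_lt_compat => //.
have aR : (1 <= INR a)%R by apply: (le_INR 1); apply/leP.
have hR : (INR a ^ k <= INR b ^ L)%R.
  by rewrite -!INR_expn; apply: le_INR; apply/leP.
have hl : (INR k * ln (INR a) <= INR L * ln (INR b))%R.
  rewrite -!ln_pow; try lra.
  destruct (Rle_lt_or_eq_dec _ _ hR) as [h|h]; last by rewrite h; lra.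
  apply: Rlt_le; apply: ln_increasing => //; apply: pow_lt; lra.
have eR : (INR k * INR p = INR L * INR q)%R by rewrite -!mult_INR -!mulnE e.
rewrite /Rpower; apply: exp_le.
have key : (INR q * ln (INR a) <= INR p * ln (INR b))%R.
  apply: (Rmult_le_reg_l (INR k)) => //.
  have -> : (INR k * (INR p * ln (INR b)) = INR q * (INR L * ln (INR b)))%R.
    by rewrite -Rmult_assoc eR; lra.
  have -> : (INR k * (INR q * ln (INR a)) = INR q * (INR k * ln (INR a)))%R by lra.
  by apply: Rmult_le_compat_l; lra.
apply: (Rmult_le_reg_l (INR p * INR q)); first by apply: Rmult_lt_0_compat.
have -> : (INR p * INR q * (/ INR p * ln (INR a)) = INR q * ln (INR a))%R by field; lra.
have -> : (INR p * INR q * (/ INR q * ln (INR b)) = INR p * ln (INR b))%R by field; lra.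
exact: key.
Qed.

End RpM.
Import RpM.

Module CoreM.
Import all_order all_algebra ring lra.
Import Order.TTheory GRing.Theory Num.Theory.
Import ssrnat.
Import Order.TTheory GRing.Theory Num.Theory.
Local Open Scope ring_scope.

Lemma fin_ineq (R : realFieldType) (k : nat) (n m T al : R) : (0 < k)%N ->
  0 <= n -> 0 <= m -> 0 <= T -> 0 <= al -> al <= 1 ->
  n ^+ k <= al ^+ k * T -> m ^+ k <= (1 - al) ^+ k * T -> (n + m) ^+ k <= T.
Proof.
move=> k0 n0 m0 T0 a0 a1 hn hm.
have zero (x : R) : 0 <= x -> x ^+ k <= 0 -> x = 0.
  move=> x0 hx; apply/eqP; have := expf_eq0 x k; rewrite k0 /= => <-.
  by rewrite eq_le hx exprn_ge0.
have [ea|na] := eqVneq al 0.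
  move: hn; rewrite ea expr0n (gtn_eqF k0) mul0r => /(zero n n0) ->.
  by move: hm; rewrite ea subr0 expr1n mul1r add0r.
have [ea|na1] := eqVneq al 1.
  move: hm; rewrite ea subrr expr0n (gtn_eqF k0) mul0r => /(zero m m0) ->.
  by move: hn; rewrite ea expr1n mul1r addr0.
have ap : 0 < al by rewrite lt_def na a0.
have bp : 0 < 1 - al by rewrite subr_gt0 lt_neqAle na1 a1.
set N := n / al; set M := m / (1 - al).
have N0 : 0 <= N by rewrite divr_ge0 // ltW.
have M0 : 0 <= M by rewrite divr_ge0 // ltW.
have hN : N ^+ k <= T.
  rewrite /N exprMn exprVn ler_pdivrMr ?exprn_gt0 // mulrC //.
have hM : M ^+ k <= T.
  rewrite /M exprMn exprVn ler_pdivrMr ?exprn_gt0 // mulrC //.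
have en : n = al * N by rewrite /N mulrC divfK // gt_eqF.
have em : m = (1 - al) * M by rewrite /M mulrC divfK // gt_eqF.
have [le|le] := leP N M.
  apply: le_trans hM; apply: lerXn2r; rewrite ?nnegrE ?addr_ge0 //.
  rewrite en em; nra.
apply: le_trans hN; apply: lerXn2r; rewrite ?nnegrE ?addr_ge0 //.
rewrite en em; nra.
Qed.

Lemma core_ineq (R : realFieldType) k (a b : 'I_k -> R) (n m C : R) : (0 < k)%N ->
  (forall i, 0 <= a i) -> (forall i, 0 <= b i) -> 0 <= C -> 0 <= n -> 0 <= m ->
  n ^+ k <= (\prod_i a i) * C -> m ^+ k <= (\prod_i b i) * C ->
  (n + m) ^+ k <= (\prod_i (a i + b i)) * C.
Proof.
move=> k0 a0 b0 C0 n0 m0 hn hm.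
have zero (x : R) : 0 <= x -> x ^+ k <= 0 -> x = 0.
  move=> x0 hx; apply/eqP; have := expf_eq0 x k; rewrite k0 /= => <-.
  by rewrite eq_le hx exprn_ge0.
have T0 : 0 <= (\prod_i (a i + b i)) * C.
  by rewrite mulr_ge0 // prodr_ge0 // => i _; rewrite addr_ge0.
case: (boolP [exists i, a i + b i == 0]).
  move/existsP=> [i /eqP hi].
  have ai : a i = 0 by have := a0 i; have := b0 i; lra.
  have bi : b i = 0 by have := a0 i; have := b0 i; lra.
  move: hn; rewrite (bigD1 i) //= ai mul0r mul0r => /(zero n n0) ->.
  move: hm; rewrite (bigD1 i) //= bi mul0r mul0r => /(zero m m0) ->.
  by rewrite addr0 expr0n (gtn_eqF k0).
rewrite negb_exists => /forallP hpos.
have pos i : 0 < a i + b i by rewrite lt_def addr_ge0 // andbT; exact: hpos.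
pose u i := a i / (a i + b i).
have ea : \prod_i a i = (\prod_i u i) * \prod_i (a i + b i).
  by rewrite /u prodf_div divfK // gt_eqF // prodr_gt0.
have eb : \prod_i b i = (\prod_i (1 - u i)) * \prod_i (a i + b i).
  rewrite [\prod_i (1 - u i)](eq_bigr (fun i => b i / (a i + b i))); last first.
    move=> i _; rewrite /u; have := pos i; rewrite lt_def => /andP[h _]; field; exact: h.
  by rewrite prodf_div divfK // gt_eqF // prodr_gt0.
have u0 i : 0 <= u i by rewrite /u divr_ge0 // addr_ge0.
have u1 i : u i <= 1.
  by rewrite /u ler_pdivrMr // mul1r lerDl.
have u1' i : 0 <= 1 - u i by rewrite subr_ge0.
have agm := leif_AGM (A := predT) (E := u) (fun i _ => u0 i).
have agm2 := leif_AGM (A := predT) (E := fun i => 1 - u i) (fun i _ => u1' i).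
move: agm agm2; rewrite /= cardT size_enum_ord; move=> [agm _] [agm2 _].
have pT (f : 'I_k -> R) : \prod_(i in predT) f i = \prod_i f i by [].
have sT (f : 'I_k -> R) : \sum_(i in predT) f i = \sum_i f i by [].
rewrite !pT !sT in agm agm2.
have kR : (0 : R) < k%:R by rewrite ltr0n.
set al := (\sum_i u i) / k%:R in agm.
have sU : \sum_i u i <= k%:R.
  apply: le_trans (_ : \sum_i (1 : R) <= _).
    by apply: ler_sum => i _.
  by rewrite sumr_const card_ord.
have sU0 : 0 <= \sum_i u i by apply: sumr_ge0.
have e1 : (\sum_i (1 - u i)) / k%:R = 1 - al.
  rewrite sumrB sumr_const card_ord /al.
  field; by rewrite gt_eqF.
rewrite e1 in agm2.
have P0 : 0 <= \prod_i (a i + b i) by rewrite prodr_ge0 // => i _; rewrite addr_ge0.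
apply: (@fin_ineq R k n m _ al k0 n0 m0 T0).
- by rewrite /al divr_ge0 // ltW.
- by rewrite /al ler_pdivrMr // mul1r.
- apply: (le_trans hn); rewrite ea -mulrA; exact: ler_wpM2r.
- apply: (le_trans hm); rewrite eb -mulrA; exact: ler_wpM2r.
Qed.

Lemma core_nat k (a b : 'I_k -> nat) (n m C : nat) : (0 < k)%N ->
  (n ^ k <= (\prod_i a i) * C)%N -> (m ^ k <= (\prod_i b i) * C)%N ->
  ((n + m) ^ k <= (\prod_i (a i + b i)) * C)%N.
Proof.
move=> k0 hn hm.
have := @core_ineq rat k (fun i => (a i)%:R) (fun i => (b i)%:R) n%:R m%:R C%:R k0.
rewrite -!natrX -!natr_prod -!natrM !ler_nat.
move=> /(_ (fun i => ler0n _ _) (fun i => ler0n _ _) (ler0n _ _) (ler0n _ _) (ler0n _ _) hn hm).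
under eq_bigr do rewrite -natrD.
by rewrite -natrD -natrX -natr_prod -natrM ler_nat.
Qed.

Lemma step_arith (T : Type) (Fs : seq T) (P : pred T) (a b Q : T -> nat) (n m k : nat) :
  (0 < k)%N -> count P Fs = k ->
  (forall F, P F -> a F + b F <= Q F)%N ->
  (forall F, ~~ P F -> a F <= Q F)%N ->
  (forall F, ~~ P F -> b F <= Q F)%N ->
  (n ^ k <= \prod_(F <- Fs) a F)%N -> (m ^ k <= \prod_(F <- Fs) b F)%N ->
  ((n + m) ^ k <= \prod_(F <- Fs) Q F)%N.
Proof.
move=> k0 ck hP ha hb hn hm.
set r := filter P Fs.
have sr : size r = k by rewrite size_filter.
have [x0 _] : exists x0 : T, true.
  by case: r sr k0 => [<- //|x _ _ _]; exists x.
set C := \prod_(F <- Fs | ~~ P F) Q F.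
have split (f : T -> nat) : \prod_(F <- Fs) f F =
    \prod_(i < k) f (nth x0 r i) * \prod_(F <- Fs | ~~ P F) f F.
  rewrite (bigID P) /= -big_filter (big_nth x0) -/r sr big_mkord //.
have le1 (f : T -> nat) : (forall F, ~~ P F -> f F <= Q F)%N ->
    (\prod_(F <- Fs | ~~ P F) f F <= C)%N.
  by move=> hf; apply: leq_prod.
have hP' : forall i : 'I_k, P (nth x0 r i).
  move=> i; apply: (all_nthP x0 (filter_all P Fs)); by rewrite -/r sr.
rewrite split.
apply: leq_trans (_ : \prod_(i < k) (a (nth x0 r i) + b (nth x0 r i)) * C <= _)%N.
  apply: core_nat => //.
    by apply: (leq_trans hn); rewrite split leq_mul2l le1 ?orbT.
  by apply: (leq_trans hm); rewrite split leq_mul2l le1 ?orbT.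
by rewrite leq_mul2r leq_prod ?orbT // => i _; apply: hP.
Qed.

End CoreM.
Import CoreM.

Module ShM.
Import ssrnat.

Lemma shearer (X : finType) (Fs : seq {set X}) (k : nat) : 0 < k ->
  forall (Y : {set X}) (S : {set {set X}}),
  (forall x, x \in Y -> count (fun F : {set X} => x \in F) Fs = k) ->
  (forall A, A \in S -> A \subset Y) ->
  #|S| ^ k <= \prod_(F <- Fs) #|[set A :&: F | A in S]|.
Proof.
move=> k0 Y; move: {2}#|Y| (erefl #|Y|) => n; elim: n Y => [|n IH] Y hY S hc hS.
  have Y0 : Y = set0 by apply/eqP; rewrite -cards_eq0 hY.
  have S0 A : A \in S -> A = set0.
    by move=> /hS; rewrite Y0 subset0 => /eqP.
  have hS1 : #|S| <= 1.
    rewrite leqNgt; apply/negP => /card_gt1P [A [B [AS BS]]].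
    by rewrite (S0 A AS) (S0 B BS) eqxx.
  case: (posnP #|S|) => [-> | Spos].
    by rewrite exp0n.
  have -> : #|S| = 1 by apply/eqP; rewrite eqn_leq hS1.
  rewrite exp1n; apply: prodn_cond_gt0 => F _.
  rewrite card_gt0; apply/set0Pn.
  move: Spos; rewrite card_gt0 => /set0Pn [A AS].
  by exists (A :&: F); apply: imset_f.
have /set0Pn [x xY] : Y != set0 by rewrite -card_gt0 hY.
set Px := [set A : {set X} | x \in A].
set S0 := S :\: Px.
set S1' := S :&: Px.
set S1 := [set A :\ x | A in S1'].
have eS : #|S| = #|S0| + #|S1|.
  have -> : #|S1| = #|S1'|.
    apply: card_in_imset => A B; rewrite !inE => /andP[_ xA] /andP[_ xB] e.
    by rewrite -(setD1K xA) -(setD1K xB) e.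
  by rewrite addnC cardsID.
have hY' : #|Y :\ x| = n by move: hY; rewrite (cardsD1 x Y) xY add1n => -[].
have hc' : forall x', x' \in Y :\ x -> count (fun F : {set X} => x' \in F) Fs = k.
  by move=> x'; rewrite inE => /andP[_ /hc].
have IH0 := IH (Y :\ x) hY' S0 hc'.
have IH1 := IH (Y :\ x) hY' S1 hc'.
rewrite eS; apply: (@step_arith {set X} Fs (fun F : {set X} => x \in F) _ _ _ _ _ _ k0 _ _ _ _ (IH0 _) (IH1 _)).
- exact: hc.
- move=> F xF.
  set U0 := [set A :&: F | A in S0].
  set U1 := [set A :&: F | A in S1'].
  have eb : [set B :&: F | B in S1] = [set C :\ x | C in U1].
    rewrite -!imset_comp; apply: eq_imset => A /=.
    apply/setP => y; rewrite !inE; by case: (y == x); rewrite ?andbF.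
  rewrite eb; apply: leq_trans (_ : #|U0| + #|U1| <= _).
    by rewrite leq_add2l leq_imset_card.
  have dis : U0 :&: U1 = set0.
    apply/setP => C; rewrite !inE; apply/negP => /andP[/imsetP[A A0 ->] /imsetP[B B1 eAB]].
    move: A0 B1; rewrite !inE => /andP[xA _] /andP[_ xB].
    have : x \in B :&: F by rewrite inE xB xF.
    by rewrite -eAB inE (negbTE xA).
  rewrite -cardsUI dis cards0 addn0; apply: subset_leq_card.
  by rewrite subUset !imsetS // ?subsetDl ?subsetIl.
- by move=> F _; apply: subset_leq_card; apply: imsetS; rewrite subsetDl.
- move=> F xF; apply: subset_leq_card; apply/subsetP => C /imsetP [B /imsetP [A A1 ->] ->].
  apply/imsetP; exists A; first by move: A1; rewrite inE => /andP[].
  apply/setP => y; rewrite !inE; case: eqP => [-> | //]; by rewrite (negbTE xF) !andbF.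
- move=> A; rewrite !inE => /andP[xA AS]; rewrite subsetD1 hS //.
- move=> B /imsetP [A A1 ->]; move: A1; rewrite inE => /andP[AS _].
  rewrite subsetD1 setD11 andbT; exact: subset_trans (subsetDl _ _) (hS _ AS).
Qed.

End ShM.
Import ShM.

Module GraphM.
Import ssrnat.

Set Implicit Arguments.
Unset Strict Implicit.

Lemma prod_In (T : Type) (l : seq T) (g : T -> nat) c :
  (forall t, List.In t l -> g t <= c) -> \prod_(t <- l) g t <= c ^ size l.
Proof.
elim: l => [|t l IH] h; first by rewrite big_nil.
rewrite big_cons expnS leq_mul //; first by apply: h; left.
by apply: IH => t' ht'; apply: h; right.
Qed.

Lemma sum_In (T : Type) (l : seq T) (g : T -> nat) c :
  (forall t, List.In t l -> g t = c) -> \sum_(t <- l) g t = size l * c.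
Proof.
elim: l => [|t l IH] h; first by rewrite big_nil.
rewrite big_cons mulSn IH ?h //; first by left.
by move=> t' ht'; apply: h; right.
Qed.

Lemma tile_bound (VH VG X : finType) (l : seq (VH -> VG)) (k c : nat)
  (S : {set {set X}}) (Y : {set X}) (Fof : (VH -> VG) -> {set X}) :
  0 < k ->
  (forall x, x \in Y -> count (fun phi => x \in Fof phi) l = k) ->
  (forall A, A \in S -> A \subset Y) ->
  (forall phi, List.In phi l -> #|[set A :&: Fof phi | A in S]| <= c) ->
  #|S| ^ k <= c ^ size l.
Proof.
move=> k0 hc hS hb.
have := @shearer X (map Fof l) k k0 Y S.
rewrite big_map => h; apply: leq_trans (h _ hS) _.
  by move=> x /hc; rewrite count_map.
exact: prod_In.
Qed.

Lemma imset2 (T U : finType) (f : T -> U) (x y : T) :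
  f @: [set x; y] = [set f x; f y].
Proof. by rewrite imsetU1 imset_set1. Qed.

Lemma card_copy (VH VG : finType) (EH : {set {set VH}}) (phi : VH -> VG) :
  injective phi -> #|copy_edges EH phi| = #|EH|.
Proof. by move=> inj; rewrite /copy_edges card_imset //; apply: imset_inj. Qed.

Lemma edge_count (VG VH : finType) (EG : {set {set VG}}) (EH : {set {set VH}})
  (l : seq (VH -> VG)) k :
  (forall phi, List.In phi l -> is_copy EH EG phi) ->
  (forall e, e \in EG -> count (fun phi => e \in copy_edges EH phi) l = k) ->
  k * #|EG| = size l * #|EH|.
Proof.
move=> hcp hc.
have e1 : k * #|EG| = \sum_(e in EG) count (fun phi => e \in copy_edges EH phi) l.
  by rewrite mulnC -sum_nat_const; apply: eq_bigr => e /hc.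
rewrite e1.
have e2 : forall e, count (fun phi => e \in copy_edges EH phi) l =
    \sum_(phi <- l) (e \in copy_edges EH phi : nat).
  move=> e; elim: l {hcp hc e1} => [|p l IH]; first by rewrite big_nil.
  by rewrite big_cons /= IH.
rewrite (eq_bigr _ (fun e _ => e2 e)) exchange_big /=.
apply: sum_In => phi /hcp [inj hE].
have sub : copy_edges EH phi \subset EG.
  by apply/subsetP => z /imsetP [e eH ->]; apply: hE.
rewrite -big_mkcondr /= sum1_card -(card_copy EH inj).
apply: eq_card => z; rewrite unfold_in /=.
by case h: (z \in copy_edges EH phi); rewrite ?andbF // andbT (subsetP sub).
Qed.

Lemma path_map_gen (T U : Type) (f : T -> U) (e : T -> T -> bool) (e' : U -> U -> bool) :
  (forall x y, e x y -> e' (f x) (f y)) ->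
  forall x p, path e x p -> path e' (f x) (map f p).
Proof.
move=> he x p; elim: p x => [//|y p IH] x /= /andP[hxy hp].
by rewrite he // IH.
Qed.

Lemma cycle_map_gen (T U : Type) (f : T -> U) (e : T -> T -> bool) (e' : U -> U -> bool) :
  (forall x y, e x y -> e' (f x) (f y)) ->
  forall s, cycle e s -> cycle e' (map f s).
Proof.
move=> he [//|x s] /=; rewrite -map_rcons; exact: path_map_gen.
Qed.

Section EdgeSets.
Variables (VG VH : finType) (EG : {set {set VG}}) (EH : {set {set VH}}) (phi : VH -> VG).
Hypothesis hcp : is_copy EH EG phi.

Definition pre (B : {set {set VG}}) : {set {set VH}} := [set e : {set VH} in EH | phi @: e \in B].

Lemma pre_inj (B : {set {set VG}}) : B \subset copy_edges EH phi -> B = [set phi @: (e : {set VH}) | e in pre B].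
Proof.
move=> sB; apply/setP => z; apply/idP/imsetP.
  move=> zB; have := subsetP sB z zB; move=> /imsetP [e eH ez].
  by exists e => //; rewrite inE eH -ez zB.
by move=> [e]; rewrite inE => /andP[_ h] ->.
Qed.

Lemma edge_family_bound (PG : {set {set VG}} -> bool) (PH : {set {set VH}} -> bool) :
  (forall A, PG A -> PH (pre (A :&: copy_edges EH phi))) ->
  #|[set A :&: copy_edges EH phi | A in [set A | PG A]]| <= #|[set N | PH N]|.
Proof.
move=> hP.
set T := [set A :&: copy_edges EH phi | A in [set A | PG A]].
have -> : #|T| = #|pre @: T|.
  apply/esym/card_in_imset => B1 B2 /imsetP [A1 _ ->] /imsetP [A2 _ ->] e.
  by rewrite (pre_inj (subsetIr _ _)) e -pre_inj // subsetIr.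
apply: subset_leq_card; apply/subsetP => N /imsetP [B /imsetP [A hA ->] ->].
by rewrite inE hP //; move: hA; rewrite inE.
Qed.

Lemma matching_bound :
  #|[set A :&: copy_edges EH phi | A in [set M | is_matching EG M]]| <= n_matchings EH.
Proof.
apply: edge_family_bound => A /andP [sA hA].
case: hcp => inj hE.
apply/andP; split.
  by apply/subsetP => e; rewrite inE => /andP[].
apply/forallP => e1; apply/implyP; rewrite inE => /andP[_ h1].
apply/forallP => e2; apply/implyP; rewrite inE => /andP[_ h2].
apply/implyP => ne.
move: h1 h2; rewrite !inE => /andP[a1 _] /andP[a2 _].
have ne' : phi @: e1 != phi @: e2.
  by apply: contra ne => /eqP /(imset_inj inj) ->.
move/forallP: hA => /(_ (phi @: e1)); rewrite a1 /= => /forallP /(_ (phi @: e2)).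
rewrite a2 ne' /= => hd.
rewrite disjoint_subset; apply/subsetP => v v1; rewrite inE /=; apply/negP => v2.
by have := disjointFr hd (imset_f phi v1); rewrite (imset_f phi v2).
Qed.

Lemma forest_bound :
  #|[set A :&: copy_edges EH phi | A in
      [set F : {set {set VG}} | (F \subset EG) && `[< ~ has_cycle F >]]]| <= n_forests EH.
Proof.
apply: edge_family_bound => A /andP [sA /asboolP hA].
case: hcp => inj hE.
apply/andP; split.
  by apply/subsetP => e; rewrite inE => /andP[].
apply/asboolP => [[s [hs [us cs]]]]; apply: hA.
exists (map phi s); split; first by rewrite size_map.
split; first by rewrite map_inj_uniq.
apply: (cycle_map_gen _ cs) => x y; rewrite !inE => /andP[_].
by rewrite imset2 => /andP[].
Qed.

End EdgeSets.

Section Orient.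
Variables (VG VH : finType) (EG : {set {set VG}}) (EH : {set {set VH}}) (phi : VH -> VG).
Hypothesis hcp : is_copy EH EG phi.

Definition FofO : {set VG * VG} := [set p : VG * VG | [set p.1; p.2] \in copy_edges EH phi].

Definition hD (B : {set VG * VG}) : {ffun VH * VH -> bool} :=
  [ffun p : VH * VH => (phi p.1, phi p.2) \in B].

Definition AcycSet (V : finType) (E : {set {set V}}) : {set {ffun V * V -> bool}} :=
  [set D : {ffun V * V -> bool} | is_orientation E D && `[< ~ has_directed_cycle D >]].

Lemma inF x y : ((phi x, phi y) \in FofO) = ([set x; y] \in EH).
Proof.
case: hcp => inj _.
by rewrite inE /= -imset2 /copy_edges (mem_imset _ _ (imset_inj inj)).
Qed.

Lemma hD_inj (B1 B2 : {set VG * VG}) : B1 \subset FofO -> B2 \subset FofO -> hD B1 = hD B2 -> B1 = B2.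
Proof.
move=> s1 s2 e; apply/setP => p.
case pF: (p \in FofO); last first.
  apply/idP/idP => h; [ by rewrite (subsetP s1 _ h) in pF | by rewrite (subsetP s2 _ h) in pF].
move: pF; rewrite inE => /imsetP [E _ hE].
have : p.1 \in [set p.1; p.2] by rewrite !inE eqxx.
rewrite hE => /imsetP [a _ ha].
have : p.2 \in [set p.1; p.2] by rewrite !inE eqxx orbT.
rewrite hE => /imsetP [b _ hb].
have := congr1 (fun D : {ffun VH * VH -> bool} => D (a, b)) e; rewrite !ffunE /= -ha -hb.
by case: p {hE ha hb}.
Qed.

Lemma orient_bound :
  #|[set A :&: FofO | A in [set [set p | D p] | D : {ffun VG * VG -> bool} in AcycSet EG]]| <= n_acyclic_orientations EH.
Proof.
case: hcp => inj hE.
set T := [set A :&: FofO | A in _].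
have -> : #|T| = #|hD @: T|.
  apply/esym/card_in_imset => B1 B2 /imsetP [A1 _ ->] /imsetP [A2 _ ->].
  by apply: hD_inj; apply: subsetIr.
apply: subset_leq_card; apply/subsetP => N /imsetP [B /imsetP [A /imsetP [D hD' ->] ->] ->].
move: hD'; rewrite /AcycSet !inE /is_orientation => /andP[or1 /asboolP ac].
move: or1 => /andP[/forallP o1 /forallP o2].
have ev x y : hD ([set p | D p] :&: FofO) (x, y) = D (phi x, phi y) && ([set x; y] \in EH).
  by rewrite ffunE /= inE inE inF.
apply/andP; split; first (apply/andP; split).
- apply/forallP => x; apply/forallP => y; apply/implyP; rewrite ev => /andP[]//.
- apply/forallP => x; apply/forallP => y; apply/implyP => hxy.
  have hyx : [set y; x] \in EH by rewrite setUC.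
  rewrite !ev hxy hyx !andbT.
  have := hE _ hxy; rewrite imset2 => hG.
  by move: (o2 (phi x)) => /forallP /(_ (phi y)) /implyP /(_ hG).
- apply/asboolP => [[s [hs [us cs]]]]; apply: ac.
  exists (map phi s); split; first by rewrite size_map.
  split; first by rewrite map_inj_uniq.
  by apply: (cycle_map_gen _ cs) => x y; rewrite ev => /andP[].
Qed.

End Orient.

End GraphM.
Import GraphM.
Import ssrnat.

Theorem proposition5p3 (VG VH : finType) (EG : {set {set VG}}) (EH : {set {set VH}}) :
  simple_graph EG -> simple_graph EH ->
  EG != set0 ->
  frac_edge_tiles EH EG ->
  root_ineq n_acyclic_orientations EG EH /\
  root_ineq n_forests EG EH /\
  root_ineq n_matchings EG EH.
Proof.
move=> sG sH nG [l [k [k0 [hcp hc]]]].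
have hE := edge_count hcp hc.
have p0 : 0 < #|EG| by rewrite card_gt0.
have q0 : 0 < #|EH|.
  rewrite lt0n; apply/negP => /eqP q0; move: hE; rewrite q0 muln0 => /eqP.
  by rewrite muln_eq0 => /orP[] /eqP h; [move: k0 | move: p0]; rewrite h.
have fin (f : forall V : finType, {set {set V}} -> nat) :
    f VG EG ^ k <= f VH EH ^ size l -> root_ineq f EG EH.
  by move=> h; rewrite /root_ineq; apply: (real_part _ _ _ _ _ _ k0 p0 q0 h hE).
have hcp' phi : List.In phi l -> is_copy EH EG phi := hcp phi.
split; last split; apply: fin.
- set S := [set [set p | D p] | D : {ffun VG * VG -> bool} in AcycSet EG].
  have -> : n_acyclic_orientations EG = #|S|.
    apply/esym/card_in_imset => D1 D2 _ _ e; apply/ffunP => p.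
    by move/setP: e => /(_ p); rewrite !inE.
  apply: (tile_bound (Y := [set p : VG * VG | [set p.1; p.2] \in EG])
                     (Fof := fun phi => FofO EH phi) k0).
  + move=> x; rewrite inE => /hc <-; apply: eq_count => phi; by rewrite inE.
  + move=> A /imsetP [D]; rewrite /AcycSet inE /is_orientation => /andP[/andP[/forallP o1 _] _] ->.
    apply/subsetP => -[x y]; rewrite !inE => hxy.
    by move: (o1 x) => /forallP /(_ y) /implyP /(_ hxy).
  + by move=> phi /hcp' hp; apply: orient_bound.
- apply: (tile_bound (Y := EG) (Fof := fun phi => copy_edges EH phi) k0) => //.
  + by move=> A; rewrite inE => /andP[].
  + by move=> phi /hcp' hp; apply: forest_bound.
- apply: (tile_bound (Y := EG) (Fof := fun phi => copy_edges EH phi) k0) => //.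
  + by move=> A; rewrite inE => /andP[].
  + by move=> phi /hcp' hp; apply: matching_bound.
Qed.
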